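(* Let $X_1,\dots,X_k$ be Boolean variables and consider a classical logistic regression model with bias $\theta_0\in\mathbb{R}$ and weights $\theta_1,\dots,\theta_k\in\mathbb{R}$, defining $\Pr(Y=1\mid \mathbf{x}) = 1/\bigl(1+\exp(-(\theta_0+\sum_{i=1}^k \theta_i x_i))\bigr)$ for inputs $\mathbf{x}=(x_1,\dots,x_k)$. Then there exists a logistic circuit over $X_1,\dots,X_k$ that is equivalent to this model, i.e. it defines the same conditional distribution $\Pr(Y=1\mid\mathbf{x})$ for every input $\mathbf{x}\in[0,1]^k$.
   Context: A logical circuit over Boolean variables $X_1,\dots,X_k$ is a rooted directed acyclic graph whose leaves are literals $X_i$ or $\neg X_i$ and whose inner nodes are AND gates or OR gates; each node represents a logical sentence in the usual way. An AND gate is decomposable if its inputs mention pairwise disjoint sets of variables; an OR gate is deterministic if for every complete assignment at most one of its inputs is satisfied. A logistic circuit is a logical circuit whose root is an OR gate, all of whose AND gates are decomposable and all of whose OR gates are deterministic, together with a real parameter $\theta$ on each input wire of each OR gate. For an input $\mathbf{x}\in[0,1]^k$, let $\Pr_{\mathbf{x}}$ be the fully factorized distribution with $\Pr_{\mathbf{x}}(X_i=1)=x_i$ independently, and $\Pr_{\mathbf{x}}(n)$ the probability of the sentence represented by node $n$. For an OR gate $n$ with child $c$, the flow is $f(n,\mathbf{x},c)=\Pr_{\mathbf{x}}(c)/\Pr_{\mathbf{x}}(n)$ (taken to be $0$ if $\Pr_{\mathbf{x}}(n)=0$); for Boolean $\mathbf{x}$ this equals $1$ if $\mathbf{x}$ satisfies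 $c$ and $0$ otherwise. The weight function is defined bottom-up: $g_n(\mathbf{x})=0$ for a leaf; $g_n(\mathbf{x})=\sum_i g_{c_i}(\mathbf{x})$ for an AND gate with children $c_i$; $g_n(\mathbf{x})=\sum_i f(n,\mathbf{x},c_i)\,(g_{c_i}(\mathbf{x})+\theta_i)$ for an OR gate with inputs $(c_i,\theta_i)$. With root $r$, the logistic circuit defines $\Pr(Y=1\mid\mathbf{x})=1/(1+\exp(-g_r(\mathbf{x})))$. *)

(* Defs.v *)
From HB Require Import structures.
From mathcomp Require Import all_boot all_order all_algebra.
From mathcomp Require Import reals sequences exp.
Set Implicit Arguments. Unset Strict Implicit. Unset Printing Implicit Defensive.
Import Order.TTheory GRing.Theory Num.Theory.
Local Open Scope ring_scope.

(* A DAG is represented by its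
   tree unfolding (sharing does not affect any of the semantics below). *)
Inductive circuit (k : nat) (R : Type) : Type :=
| Lit  of 'I_k & bool
| And  of seq (circuit k R)
| Or   of seq (circuit k R * R).

Arguments Lit {k R}.
Arguments And {k R}.
Arguments Or {k R}.

Section Semantics.
Variables (k : nat) (R : realType).
Local Notation circ := (circuit k R).

Fixpoint sat (c : circ) (a : 'I_k -> bool) : bool :=
  match c with
  | Lit i b => a i == b
  | And cs => all (fun d => sat d a) cs
  | Or cs => has (fun p => sat p.1 a) cs
  end.

Fixpoint vars (c : circ) : seq 'I_k :=
  match c with
  | Lit i _ => [:: i]
  | And cs => flatten (map vars cs)
  | Or cs => flatten (map (fun p => vars p.1) cs)
  end.

Definition disjoint_vars (c d : circ) : bool :=
  all (fun v => v \notin vars d) (vars c).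

Fixpoint decomp_determ (c : circ) : bool :=
  match c with
  | Lit _ _ => true
  | And cs => all decomp_determ cs && pairwise disjoint_vars cs
  | Or cs => all (fun p => decomp_determ p.1) cs &&
             [forall a : {ffun 'I_k -> bool}, count (fun p => sat p.1 a) cs <= 1]%N
  end.

Definition is_or (c : circ) : bool := if c is Or _ then true else false.

Definition logistic_circuit (c : circ) : bool := is_or c && decomp_determ c.

(* Pr_x(n): probability of the sentence of n under the fully factorized
   distribution with Pr(X_i = 1) = x_i *)
Definition prob (x : 'I_k -> R) (c : circ) : R :=
  \sum_(a : {ffun 'I_k -> bool} | sat c a)
     \prod_(i < k) (if a i then x i else 1 - x i).

Definition flow (x : 'I_k -> R) (n c : circ) : R :=
  if prob x n == 0 then 0 else prob x c / prob x n.

Fixpoint weight (x : 'I_k -> R) (c : circ) : R :=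
  match c with
  | Lit _ _ => 0
  | And cs => foldr (fun d acc => weight x d + acc) 0 cs
  | Or cs => foldr (fun p acc => flow x c p.1 * (weight x p.1 + p.2) + acc) 0 cs
  end.

Definition lc_prob (c : circ) (x : 'I_k -> R) : R :=
  1 / (1 + expR (- weight x c)).

Definition lr_prob (theta0 : R) (theta : 'I_k -> R) (x : 'I_k -> R) : R :=
  1 / (1 + expR (- (theta0 + \sum_(i < k) theta i * x i))).

End Semantics.

(* Main.v *)
Require Import Defs.
From mathcomp Require Import all_boot all_order all_algebra.
From mathcomp Require Import reals sequences exp.
Import Order.TTheory GRing.Theory Num.Theory.
Local Open Scope ring_scope.

Set Implicit Arguments. Unset Strict Implicit.
Section Aux.
Variables (R : realType) (k : nat).

Definition Fp (x : 'I_k -> R) (j : 'I_k) (b : bool) : R :=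
  if b then x j else 1 - x j.

Lemma prob_all (x : 'I_k -> R) (c : circuit k R) :
  (forall a, sat c a) -> prob x c = 1.
Proof.
move=> H; rewrite /prob.
rewrite (eq_bigl (fun _ => true)); last by move=> a; rewrite H.
rewrite -(bigA_distr_bigA (fun j b => Fp x j b)) /=.
by apply: big1 => j _; rewrite big_bool /Fp /= addrCA subrr addr0.
Qed.

Lemma prob_lit (x : 'I_k -> R) (i : 'I_k) :
  prob x (Lit i true) = x i.
Proof.
pose G j b : R := if j == i then (if b then x i else 0) else Fp x j b.
have E : \sum_(f : {ffun 'I_k -> bool}) \prod_(j < k) G j (f j) = x i.
  rewrite -(bigA_distr_bigA G) /= (bigD1 i) //=.
  have -> : \prod_(j < k | j != i) \sum_(b : bool) G j b = 1.
    apply: big1 => j ji; rewrite big_bool /G (negbTE ji) /Fp /=.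
    by rewrite addrCA subrr addr0.
  rewrite big_bool /G eqxx /=.
  exact: (etrans (mulr1 _) (addr0 _)).
rewrite -E /prob [RHS](bigID (fun a : {ffun 'I_k -> bool} => a i == true)) /=.
rewrite [X in _ = _ + X]big1 ?addr0.
  apply: eq_bigr => a /eqP ai; apply: eq_bigr => j _.
  rewrite /G /Fp; case: eqP => [->|//]; by rewrite ai.
move=> a; case E2: (a i) => // _.
by rewrite (bigD1 i) //= /G eqxx E2 mul0r.
Qed.

Definition orc (theta : 'I_k -> R) (i : 'I_k) : circuit k R :=
  Or [:: (Lit i true, theta i); (Lit i false, 0)].

Definition root (theta0 : R) (theta : 'I_k -> R) : circuit k R :=
  Or [:: (And (map (orc theta) (index_enum 'I_k)), theta0)].

Lemma sat_orc theta i a : sat (orc theta i) a.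
Proof. by rewrite /= orbF; case: (a i). Qed.

Lemma sat_and theta a : sat (And (map (orc theta) (index_enum 'I_k))) a.
Proof. by rewrite /= all_map; apply/allP => i _; apply: sat_orc. Qed.

Lemma weight_orc x theta i : weight x (orc theta i) = x i * theta i.
Proof.
rewrite /= /flow prob_all; last by move=> a; apply: sat_orc.
by rewrite oner_eq0 !divr1 prob_lit !add0r mulr0 !addr0.
Qed.

Lemma foldr_sum x (f : 'I_k -> circuit k R) (s : seq 'I_k) :
  foldr (fun d acc => weight x d + acc) 0 (map f s) = \sum_(i <- s) weight x (f i).
Proof. by elim: s => [|a s IH] /=; rewrite ?big_nil ?big_cons ?IH. Qed.

End Aux.
Unset Implicit Arguments.

Theorem proposition1 (R : realType) (k : nat) (theta0 : R) (theta : 'I_k -> R) :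
  exists c : circuit k R,
    logistic_circuit c /\
    forall x : 'I_k -> R, (forall i, 0 <= x i <= 1) ->
      lc_prob c x = lr_prob theta0 theta x.
Proof.
exists (root theta0 theta); split.
  rewrite /logistic_circuit /=; apply/andP; split=> //.
  apply/andP; split.
    apply/andP; split.
      rewrite all_map; apply/allP => i _ /=.
      apply/forallP => a /=; by case: (a i).
    rewrite pairwise_map.
    have U := index_enum_uniq 'I_k; rewrite uniq_pairwise in U.
    apply: (sub_pairwise _ U).
    move=> i j /= ij; by rewrite /disjoint_vars /= !inE (negbTE ij).
    by [].
  by apply/forallP => a /=; case: all.
move=> x _; rewrite /lc_prob /lr_prob /=.
have P1 : prob x (root theta0 theta) = 1.
  apply: prob_all => a /=; rewrite orbF; exact: sat_and.
have P2 : prob x (And (map (orc theta) (index_enum 'I_k))) = 1.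
  by apply: prob_all => a; apply: sat_and.
rewrite /flow P1 P2 oner_eq0 divr1 mul1r addr0 foldr_sum.
rewrite mul1r div1r [_ + theta0]addrC; do 4 f_equal.
have -> : \sum_(i < k) weight x (orc theta i) = \sum_(i < k) theta i * x i.
  by apply: eq_bigr => i _; rewrite weight_orc mulrC.
by [].
Qed.
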